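(* Let $(J,|\cdot|)$ be a graded index set, $(\omega_k)_{k\in\mathbb{N}}$ a convex growth family and $B$ a Banach space. Then the direct limit $\ell^\infty_{\rightarrow}(J,B)$ is compactly regular: for every compact set $K\subseteq\ell^\infty_{\rightarrow}(J,B)$ there is $k\in\mathbb{N}$ such that $K$ is a compact subset of $\ell^\infty_k(J,B)$.
   Context: A graded index set is a set $J$ with a map $|\cdot|\colon J\to\mathbb{N}_0$. Growth family $(\omega_k)_{k\in\mathbb{N}}$, $\omega_k\colon\mathbb{N}_0\to\mathbb{N}$: (W1) $\omega_k(0)=1$, $\omega_k(n)\le\omega_{k+1}(n)$; (W2) $\omega_k(n)\omega_k(m)\le\omega_k(n+m)$; (W3) for each $k_1$ some $k_2\ge k_1$ with $\omega_{k_2}(n)\ge2^n\omega_{k_1}(n)$ for all $n$; convex: $k_2$ can be chosen so that for each $k_3\ge k_2$ some $\alpha\in]0,1[$ gives $\omega_{k_1}(n)^\alpha\omega_{k_3}(n)^{1-\alpha}\le\omega_{k_2}(n)$ for all $n$. $\ell^\infty_k(J,B)$ is the Banach space of $f\colon J\to B$ with $\|f\|_{\ell^\infty_k}=\sup_\tau\|f(\tau)\|/\omega_k(|\tau|)<\infty$; $\ell^\infty_{\rightarrow}(J,B)=\bigcup_k\ell^\infty_k(J,B)$ with the locally convex direct limit topology. *)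

(* Defs.v *)
From HB Require Import structures.
From mathcomp Require Import all_boot all_order all_algebra.
From mathcomp Require Import all_classical all_reals all_analysis.
Set Implicit Arguments. Unset Strict Implicit. Unset Printing Implicit Defensive.
Import Order.TTheory GRing.Theory Num.Theory.
Import numFieldNormedType.Exports.
Local Open Scope classical_set_scope.
Local Open Scope ring_scope.

Definition growth_family (om : nat -> nat -> nat) : Prop :=
  [/\ (forall k n, (0 < om k n)%N),
      (forall k, om k 0%N = 1%N) /\ (forall k n, (om k n <= om k.+1 n)%N),
      (forall k n m, (om k n * om k m <= om k (n + m))%N)
    & (forall k1, exists k2, (k1 <= k2)%N /\
         forall n, (2 ^ n * om k1 n <= om k2 n)%N)].                        (* W3 *)

Definition convex_growth_family (R : realType) (om : nat -> nat -> nat) : Prop :=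
  growth_family om /\
  forall k1, exists k2, [/\ (k1 <= k2)%N,
     (forall n, (2 ^ n * om k1 n <= om k2 n)%N)
   & forall k3, (k2 <= k3)%N -> exists alpha : R, 0 < alpha < 1 /\
       forall n, ((om k1 n)%:R `^ alpha) * ((om k3 n)%:R `^ (1 - alpha))
                   <= (om k2 n)%:R :> R].

Section Spaces.
Variables (R : realType) (B : normedModType R) (J : Type) (deg : J -> nat)
          (om : nat -> nat -> nat).

Definition wvals (k : nat) (f : J -> B) : set R :=
  [set `|f t| / (om k (deg t))%:R | t in [set: J]].

Definition wnorm (k : nat) (f : J -> B) : R := sup (wvals k f).

Definition ell_k (k : nat) : set (J -> B) := [set f | has_ubound (wvals k f)].

Definition ell_lim : set (J -> B) := [set f | exists k, ell_k k f].

Definition fsub (f g : J -> B) : J -> B := fun t => f t - g t.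

(* continuous seminorms of the locally convex direct limit: seminorms on
   l^oo_-> whose restriction to every step l^oo_k is continuous *)
Definition lim_seminorm (p : (J -> B) -> R) : Prop :=
  [/\ (forall f, ell_lim f -> 0 <= p f),
      (forall f g, ell_lim f -> ell_lim g -> p (fun t => f t + g t) <= p f + p g),
      (forall (a : R) f, ell_lim f -> p (fun t => a *: f t) = `|a| * p f)
    & (forall k, exists C : R, forall f, ell_k k f -> p f <= C * wnorm k f)].

(* open sets of the locally convex direct limit topology on l^oo_-> *)
Definition lim_open (U : set (J -> B)) : Prop :=
  U `<=` ell_lim /\
  forall f, U f -> exists p, lim_seminorm p /\ exists2 e : R, 0 < e &
      [set g | ell_lim g /\ p (fsub g f) < e] `<=` U.

Definition ellk_open (k : nat) (U : set (J -> B)) : Prop :=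
  U `<=` ell_k k /\
  forall f, U f -> exists2 e : R, 0 < e &
      [set g | ell_k k g /\ wnorm k (fsub g f) < e] `<=` U.

End Spaces.

Definition compact_wrt (T : Type) (isopen : set T -> Prop) (K : set T) : Prop :=
  forall (I : Type) (U : I -> set T), (forall i, isopen (U i)) ->
    K `<=` \bigcup_i U i ->
    exists2 D : set I, finite_set D & K `<=` \bigcup_(i in D) U i.

(* Main.v *)
Require Import Defs.
From HB Require Import structures.
From mathcomp Require Import all_boot all_order all_algebra.
From mathcomp Require Import all_classical all_reals all_analysis.
From mathcomp Require Import lra.
Import Order.TTheory GRing.Theory Num.Theory.
Import numFieldNormedType.Exports.
Local Open Scope classical_set_scope.
Local Open Scope ring_scope.

Lemma sup_le0 {R : realType} (A : set R) y :
  (forall x, A x -> x <= y) -> 0 <= y -> sup A <= y.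
Proof.
move=> Ay y0; case: (pselect (A !=set0)) => [An0|An0].
  by apply: ge_sup => // x /Ay.
have -> : A = set0 by apply/seteqP; split=> x // Ax; apply: An0; exists x.
by rewrite sup0.
Qed.

Lemma sup_ge0' {R : realType} (A : set R) :
  (forall x, A x -> 0 <= x) -> has_ubound A -> 0 <= sup A.
Proof.
move=> A0 hA; case: (pselect (A !=set0)) => [[x Ax]|An0].
  apply: le_trans (A0 _ Ax) _; exact: ub_le_sup.
have -> : A = set0 by apply/seteqP; split=> x // Ax; apply: An0; exists x.
by rewrite sup0.
Qed.

Lemma supZ' {R : realType} (A : set R) (c : R) :
  (forall x, A x -> 0 <= x) -> has_ubound A -> 0 <= c ->
  sup [set c * x | x in A] = c * sup A.
Proof.
move=> A0 hA c0.
have hcA : has_ubound [set c * x | x in A].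
  case: hA => M HM; exists (c * M) => _ [x Ax <-]; rewrite ler_wpM2l //; exact: HM.
have cA0 : forall y, [set c * x | x in A] y -> 0 <= y.
  by move=> _ [x Ax <-]; rewrite mulr_ge0 // A0.
have sA0 := sup_ge0' _ A0 hA.
apply/le_anti/andP; split.
  apply: sup_le0; last by rewrite mulr_ge0.
  move=> _ [x Ax <-]; rewrite ler_wpM2l //; exact: ub_le_sup.
have [c00|cn0] := eqVneq c 0; first by rewrite {1}c00 mul0r; exact: sup_ge0' _ cA0 hcA.
have cp : 0 < c by rewrite lt_neqAle eq_sym cn0 c0.
rewrite mulrC -ler_pdivlMr //.
apply: sup_le0; last by apply: divr_ge0 => //; exact: sup_ge0' _ cA0 hcA.
move=> x Ax; rewrite ler_pdivlMr // mulrC; apply: ub_le_sup => //; by exists x.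
Qed.

Lemma divle {R : realType} (x a b : R) : 0 <= x -> 0 < a -> a <= b -> x / b <= x / a.
Proof.
move=> x0 a0 ab; rewrite ler_wpM2l // lef_pV2 // posrE //; exact: lt_le_trans ab.
Qed.

Definition pS {R : realType} {B : normedModType R} {J : Type}
  (S : set (J * R)) (h : J -> B) : R :=
  sup [set `|h st.1| * st.2 | st in S].

Definition goodS {R : realType} {J : Type} (deg : J -> nat) (om : nat -> nat -> nat)
  (S : set (J * R)) : Prop :=
  (forall st, S st -> 0 <= st.2) /\
  forall m, exists C : R, forall st, S st -> st.2 * (om m (deg st.1))%:R <= C.

Definition opos (om : nat -> nat -> nat) := forall k n, (0 < om k n)%N.

Lemma ellkP {R : realType} {B : normedModType R} {J : Type} (deg : J -> nat) om k
  (f : J -> B) : ell_k deg om k f ->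
  exists M : R, 0 <= M /\ forall t, `|f t| / (om k (deg t))%:R <= M.
Proof.
move=> [M HM]; exists `|M|; split => // t.
apply: le_trans (ler_norm M); apply: HM; by exists t.
Qed.

Lemma ellkI {R : realType} {B : normedModType R} {J : Type} (deg : J -> nat) om k
  (f : J -> B) (M : R) : (forall t, `|f t| / (om k (deg t))%:R <= M) ->
  ell_k deg om k f.
Proof. by move=> HM; exists M => _ [t _ <-]. Qed.

Lemma omle (om : nat -> nat -> nat) : (forall k n, (om k n <= om k.+1 n)%N) ->
  forall m k n, (m <= k)%N -> (om m n <= om k n)%N.
Proof.
move=> omS m k n /subnK <-; elim: (k - m)%N => [|d IH] //.
by rewrite addSn; exact: leq_trans IH (omS _ _).
Qed.

Lemma ellk_mono {R : realType} {B : normedModType R} {J : Type} (deg : J -> nat) om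
  (hpos : opos om) (omS : forall k n, (om k n <= om k.+1 n)%N) k k' (f : J -> B) :
  (k <= k')%N -> ell_k deg om k f -> ell_k deg om k' f.
Proof.
move=> kk /ellkP [M [M0 HM]]; apply: (@ellkI _ _ _ _ _ _ _ (M)) => t.
apply: le_trans (HM t); apply: divle => //; first by rewrite ltr0n.
by rewrite ler_nat; apply: omle.
Qed.

Lemma ellk_lin {R : realType} {B : normedModType R} {J : Type} (deg : J -> nat) om
  (hpos : opos om) k (a b : R) (f g : J -> B) :
  ell_k deg om k f -> ell_k deg om k g -> ell_k deg om k (fun t => a *: f t + b *: g t).
Proof.
move=> /ellkP [M [M0 HM]] /ellkP [N [N0 HN]].
apply: (@ellkI _ _ _ _ _ _ _ (`|a| * M + `|b| * N)) => t.
have w0 : 0 < (om k (deg t))%:R :> R by rewrite ltr0n.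
apply: le_trans (_ : (`|a| * `|f t| + `|b| * `|g t|) / (om k (deg t))%:R <= _).
  by apply: ler_wpM2r; [rewrite invr_ge0 ltW | rewrite -!normrZ ler_normD].
rewrite mulrDl -!mulrA; apply: lerD; apply: ler_wpM2l => //.
Qed.

Lemma ell_lim_lin {R : realType} {B : normedModType R} {J : Type} (deg : J -> nat) om
  (hpos : opos om) (omS : forall k n, (om k n <= om k.+1 n)%N) (a b : R) (f g : J -> B) :
  ell_lim deg om f -> ell_lim deg om g -> ell_lim deg om (fun t => a *: f t + b *: g t).
Proof.
move=> [k Hf] [k' Hg]; exists (maxn k k'); apply: ellk_lin => //.
  by apply: ellk_mono Hf => //; rewrite leq_maxl.
by apply: ellk_mono Hg => //; rewrite leq_maxr.
Qed.

Lemma pS_bounded {R : realType} {B : normedModType R} {J : Type} (deg : J -> nat) om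
  (hpos : opos om) (S : set (J * R)) k (h : J -> B) :
  goodS deg om S -> ell_k deg om k h -> has_ubound [set `|h st.1| * st.2 | st in S].
Proof.
move=> [S0 SC] /ellkP [M [M0 HM]]; have [C HC] := SC k.
exists (M * `|C|) => _ [[t c] Stc <-] /=.
have w0 : 0 < (om k (deg t))%:R :> R by rewrite ltr0n.
have -> : `|h t| * c = (`|h t| / (om k (deg t))%:R) * (c * (om k (deg t))%:R).
  by rewrite [c * _]mulrC mulrA divfK // gt_eqF.
apply: ler_pM.
- by apply: divr_ge0 => //; exact: ltW.
- by apply: mulr_ge0; [exact: S0 Stc | exact: ltW].
- exact: HM.
- exact: le_trans (HC _ Stc) (ler_norm C).
Qed.

Lemma pS_seminorm {R : realType} {B : normedModType R} {J : Type} (deg : J -> nat) om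
  (hpos : opos om) (omS : forall k n, (om k n <= om k.+1 n)%N) (S : set (J * R)) :
  goodS deg om S -> lim_seminorm deg om (@pS R B J S).
Proof.
move=> gS; have [S0 SC] := gS.
have nn : forall h : J -> B, forall x, [set `|h st.1| * st.2 | st in S] x -> 0 <= x.
  by move=> h _ [st Sst <-]; apply: mulr_ge0 => //; exact: S0.
have bd : forall h : J -> B, ell_lim deg om h -> has_ubound [set `|h st.1| * st.2 | st in S].
  by move=> h [k hk]; exact: pS_bounded hk.
have p0 : forall f : J -> B, ell_lim deg om f -> 0 <= pS S f.
  by move=> f Lf; apply: sup_ge0' (nn f) (bd f Lf).
split => //.
- move=> f g Lf Lg; apply: sup_le0; last by rewrite addr_ge0 // p0.
  move=> _ [[t c] Stc <-] /=.
  apply: le_trans (_ : (`|f t| + `|g t|) * c <= _).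
    by apply: ler_wpM2r; [exact: S0 Stc | exact: ler_normD].
  rewrite mulrDl; apply: lerD; apply: ub_le_sup; try exact: bd; by exists (t, c).
- move=> a f Lf; rewrite /pS -supZ' //; [|exact: nn|exact: bd].
  congr sup; apply/seteqP; split.
    move=> _ [st Sst <-]; exists (`|f st.1| * st.2); first by exists st.
    by rewrite /= normrZ mulrA.
  move=> _ [_ [st Sst <-] <-]; exists st => //=; by rewrite normrZ mulrA.
- move=> k; have [C HC] := SC k; exists `|C| => f Lf.
  have w0 : forall t, 0 < (om k (deg t))%:R :> R by move=> t; rewrite ltr0n.
  have wn0 : 0 <= wnorm deg om k f.
    apply: sup_ge0' Lf => _ [t _ <-]; by apply: divr_ge0 => //; exact: ltW.
  apply: sup_le0; last by apply: mulr_ge0.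
  move=> _ [[t c] Stc <-] /=.
  have -> : `|f t| * c = (`|f t| / (om k (deg t))%:R) * (c * (om k (deg t))%:R).
    by rewrite [c * _]mulrC mulrA divfK // gt_eqF.
  rewrite mulrC; apply: ler_pM.
  + by apply: mulr_ge0; [exact: S0 Stc | exact: ltW].
  + by apply: divr_ge0 => //; exact: ltW.
  + exact: le_trans (HC _ Stc) (ler_norm C).
  + apply: ub_le_sup => //; by exists t.
Qed.

Lemma ball_open {R : realType} {B : normedModType R} {J : Type} (deg : J -> nat) om
  (hpos : opos om) (omS : forall k n, (om k n <= om k.+1 n)%N)
  (P : Prop) (p : (J -> B) -> R) (f0 : J -> B) (e : R) :
  lim_seminorm deg om p -> (P -> ell_lim deg om f0) ->
  lim_open deg om [set g | P /\ ell_lim deg om g /\ p (fsub g f0) < e].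
Proof.
move=> hp Lf0; split; first by move=> g [_ []].
move=> g [HP [Lg pg]]; exists p; split => //; exists (e - p (fsub g f0)).
  by rewrite subr_gt0.
have L0 := Lf0 HP.
have Lsub : forall u v : J -> B, ell_lim deg om u -> ell_lim deg om v ->
    ell_lim deg om (fsub u v).
  move=> u v Lu Lv; have := @ell_lim_lin _ _ _ deg om hpos omS 1 (-1) u v Lu Lv.
  by congr ell_lim; apply/funext => t; rewrite /fsub scale1r scaleN1r.
move=> h [Lh ph]; split => //; split => //.
have -> : fsub h f0 = (fun t => fsub h g t + fsub g f0 t).
  by apply/funext => t; rewrite /fsub addrA subrK.
case: hp => _ hsub _ _.
apply: le_lt_trans (hsub _ _ (Lsub _ _ Lh Lg) (Lsub _ _ Lg L0)) _.
by rewrite -ltrBrDr.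
Qed.

Theorem lemmaB4 (R : realType) (B : completeNormedModType R) (J : Type)
  (deg : J -> nat) (om : nat -> nat -> nat)
  (hom : convex_growth_family R om) (K : set (J -> B)) :
  K `<=` ell_lim deg om ->
  compact_wrt (lim_open deg om) K ->
  exists k, K `<=` ell_k deg om k /\ compact_wrt (ellk_open deg om k) K.
Proof.
move=> KL Kc.
case: hom => [[hpos [om0 omS] omM omW3] _].
have w0 : forall k t, 0 < (om k (deg t))%:R :> R by move=> k t; rewrite ltr0n.
have L0 : ell_lim deg om (fun _ : J => (0 : B)).
  by exists 0%N; apply: (@ellkI _ _ _ _ _ _ _ 0) => t; rewrite normr0 mul0r.
have [k1 [M [M0 HM]]] : exists k1 (M : R), 0 <= M /\
    forall f t, K f -> `|f t| / (om k1 (deg t))%:R <= M.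
  apply: contrapT => Hn.
  have Hk : forall k : nat, exists ft : (J -> B) * J,
      K ft.1 /\ k%:R < `|ft.1 ft.2| / (om k (deg ft.2))%:R.
    move=> k; apply: contrapT => Hk; apply: Hn; exists k, k%:R; split => // f t Kf.
    rewrite leNgt; apply/negP => lt; apply: Hk; by exists (f, t).
  have [F HF] := choice Hk.
  pose S := [set ((F k).2, ((om k (deg (F k).2))%:R)^-1 : R) | k in [set: nat]].
  have gS : goodS deg om S.
    split; first by move=> _ [k _ <-] /=; rewrite invr_ge0 ler0n.
    move=> m; exists (1 + (\max_(i < m) om m (deg (F i).2))%:R) => _ [k _ <-] /=.
    rewrite mulrC ler_pdivrMr //.
    have [mk|km] := leqP m k.
      apply: le_trans (_ : 1 * (om k (deg (F k).2))%:R <= _).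
        by rewrite mul1r ler_nat; apply: omle.
      by rewrite ler_wpM2r ?ler0n // lerDl ler0n.
    apply: le_trans (_ : (\max_(i < m) om m (deg (F i).2))%:R <= _).
      rewrite ler_nat; exact: (leq_bigmax (F := fun i : 'I_m => om m (deg (F i).2)) (Ordinal km)).
    apply: le_trans (_ : 1 + (\max_(i < m) om m (deg (F i).2))%:R <= _).
      by rewrite lerDr.
    by rewrite ler_peMr // ler1n hpos.
  have hp := @pS_seminorm R B J deg om hpos omS S gS.
  have := Kc nat (fun n => [set g | True /\ ell_lim deg om g /\ pS S (fsub g (fun _ => 0)) < n%:R])
    (fun n => @ball_open _ _ _ deg om hpos omS _ _ _ _ hp (fun _ => L0)).
  case.
    move=> f Kf; exists (Num.Def.trunc (pS S (fsub f (fun _ => 0)))).+1 => //.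
    split => //; split; [exact: KL | exact: truncnS_gt].
  move=> D /finite_seqP [s ->] Hcov.
  pose N := \max_(n <- s) n.
  have [KfN ltN] := HF N.
  have [n sn [_ [_ pn]]] := Hcov _ KfN.
  have nN : (n <= N)%N by exact: (@leq_bigmax_seq _ s xpredT (fun i => i) n sn).
  have e0 : fsub (F N).1 (fun _ => 0) = (F N).1 by apply/funext => t; rewrite /fsub subr0.
  rewrite e0 in pn.
  have [kk Lk] := KL _ KfN.
  have : `|(F N).1 (F N).2| / (om N (deg (F N).2))%:R <= pS S (F N).1.
    apply: ub_le_sup; first exact: pS_bounded Lk.
    by exists ((F N).2, ((om N (deg (F N).2))%:R)^-1) => //; exists N.
  have : (n%:R : R) <= N%:R by rewrite ler_nat.
  lra.
have Lsub : forall u v : J -> B, ell_lim deg om u -> ell_lim deg om v ->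
    ell_lim deg om (fsub u v).
  move=> u v Lu Lv; have := @ell_lim_lin _ _ _ deg om hpos omS 1 (-1) u v Lu Lv.
  by congr ell_lim; apply/funext => t; rewrite /fsub scale1r scaleN1r.
have [k2 [k12 H2]] := omW3 k1.
have le12 : forall n, (om k1 n <= om k2 n)%N by move=> n; exact: omle.
have Kk2 : K `<=` ell_k deg om k2.
  move=> f Kf; apply: (@ellkI _ _ _ _ _ _ _ M) => t.
  apply: le_trans (HM f t Kf); apply: divle => //; by rewrite ler_nat.
exists k2; split => //.
move=> I U Uo Kcov.
case: (pselect (K !=set0)) => [[f0 Kf0]|K0]; last first.
  exists set0; first exact: finite_set0.
  by move=> f Kf; exfalso; apply: K0; exists f.
have [i0 _ _] := Kcov f0 Kf0.
have Hch : forall f : J -> B, exists ie : I * R, K f -> [/\ U ie.1 f, 0 < ie.2 &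
    [set g | ell_k deg om k2 g /\ wnorm deg om k2 (fsub g f) < ie.2] `<=` U ie.1].
  move=> f; case: (pselect (K f)) => Kf; last by exists (i0, 0).
  have [i _ Ui] := Kcov f Kf; have [_ Uop] := Uo i; have [e e0 He] := Uop f Ui.
  by exists (i, e).
have [ie Hie] := choice Hch.
pose N (f : J -> B) := (Num.Def.trunc (2 * M / (ie f).2)).+1.
pose Sb (f : J -> B) := [set (t, ((om k2 (deg t))%:R)^-1 : R) | t in [set t | (deg t < N f)%N]].
have gS : forall f, goodS deg om (Sb f).
  move=> f; split; first by move=> _ [t _ <-] /=; rewrite invr_ge0 ler0n.
  move=> m; exists (\max_(i < N f) om m i)%:R => _ [t Nt <-] /=.
  rewrite mulrC ler_pdivrMr //.
  apply: le_trans (_ : (\max_(i < N f) om m i)%:R * 1 <= _); last first.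
    by rewrite ler_wpM2l ?ler0n // ler1n hpos.
  rewrite mulr1 ler_nat.
  exact: (leq_bigmax (F := fun i : 'I_(N f) => om m i) (Ordinal Nt)).
pose V (f : J -> B) := [set g | K f /\ ell_lim deg om g /\ pS (Sb f) (fsub g f) < (ie f).2].
have Vo : forall f, lim_open deg om (V f).
  move=> f; apply: (@ball_open _ _ _ deg om hpos omS _ _ _ _ (@pS_seminorm R B J deg om hpos omS _ (gS f))).
  exact: KL.
have := Kc _ V Vo.
case.
  move=> f Kf; exists f => //; split => //; split; first exact: KL.
  have [_ e0 _] := Hie f Kf.
  have -> : fsub f f = (fun t => 0 *: f t) by apply/funext => t; rewrite /fsub subrr scale0r.
  have [_ _ hZ _] := @pS_seminorm R B J deg om hpos omS _ (gS f).
  by rewrite hZ ?normr0 ?mul0r //; exact: KL.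
move=> D finD Hcov.
exists ((fun f => (ie f).1) @` D); first exact: finite_image.
move=> g Kg; have [f Df [Kf [Lg pg]]] := Hcov g Kg.
have [Uf e0 Hball] := Hie f Kf.
exists (ie f).1; first by exists f.
apply: Hball; split; first exact: Kk2.
set h := fsub g f.
set q := pS (Sb f) h.
have Hht : forall t, `|h t| / (om k1 (deg t))%:R <= M + M.
  move=> t; apply: le_trans (_ : (`|g t| + `|f t|) / (om k1 (deg t))%:R <= _).
    by apply: ler_wpM2r; [rewrite invr_ge0 ltW | exact: ler_normB].
  by rewrite mulrDl; apply: lerD; apply: HM.
have Lh : ell_k deg om k1 h by exact: (@ellkI _ _ _ _ _ _ _ (M + M)).
have q0 : 0 <= q.
  have [hq0 _ _ _] := @pS_seminorm R B J deg om hpos omS _ (gS f).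
  by apply: hq0; exists k1.
have Np : 0 < (2 ^ N f)%:R :> R by rewrite ltr0n expn_gt0.
have cbound : 2 * M / (2 ^ N f)%:R < (ie f).2.
  have := truncnS_gt (2 * M / (ie f).2); rewrite -/(N f) => hN.
  have hN2 : ((N f)%:R : R) <= (2 ^ N f)%:R by rewrite ler_nat ltnW // ltn_expl.
  rewrite ltr_pdivrMr // [(ie f).2 * _]mulrC -ltr_pdivrMr //.
  exact: lt_le_trans hN hN2.
apply: le_lt_trans (_ : Num.max q (2 * M / (2 ^ N f)%:R) < _); last by rewrite gt_max pg cbound.
apply: sup_le0; last by rewrite le_max q0.
move=> _ [t _ <-].
have [dN|dN] := ltnP (deg t) (N f).
  rewrite le_max; apply/orP; left.
  apply: ub_le_sup; first exact: pS_bounded Lh.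
  by exists (t, ((om k2 (deg t))%:R)^-1) => //; exists t.
rewrite le_max; apply/orP; right.
have le2 : (2 ^ N f * om k1 (deg t) <= om k2 (deg t))%N.
  apply: leq_trans (H2 (deg t)); rewrite leq_mul2r; apply/orP; right.
  exact: leq_pexp2l.
apply: le_trans (_ : `|h t| / (2 ^ N f * om k1 (deg t))%:R <= _).
  apply: divle => //; last by rewrite ler_nat.
  by rewrite ltr0n muln_gt0 expn_gt0 hpos.
rewrite natrM invfM mulrA -mulrA [_^-1 * _]mulrC mulrA.
apply: ler_wpM2r; first by rewrite invr_ge0 ltW.
apply: le_trans (Hht t) _; lra.
Qed.
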